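(* Let $N \ge 1$ and let $\rho_1, \rho_2$ be $N \times N$ density matrices (positive semidefinite complex matrices with unit trace). Then $$1 - G(\rho_1,\rho_2) \le D_{\mathrm{tr}}(\rho_1,\rho_2),$$ where $D_{\mathrm{tr}}(\rho_1,\rho_2) = \frac{1}{2}\mathrm{tr}|\rho_1-\rho_2|$ and $G(\rho_1,\rho_2) = \mathrm{tr}\,\rho_1\rho_2 + \sqrt{1-\mathrm{tr}\,\rho_1^2}\,\sqrt{1-\mathrm{tr}\,\rho_2^2}$. Equivalently, $$\frac{1}{2}\mathrm{tr}|\rho_1-\rho_2| + \mathrm{tr}\,\rho_1\rho_2 + \sqrt{1-\mathrm{tr}\,\rho_1^2}\,\sqrt{1-\mathrm{tr}\,\rho_2^2} \ge 1.$$
   Context: For a Hermitian matrix $A$, $|A| = \sqrt{A^2}$, so $\mathrm{tr}|A|$ is the sum of the absolute values of the eigenvalues of $A$. $D_{\mathrm{tr}}$ is called the trace distance and $G$ the superfidelity. *)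

(* Defs.v *)
(* Complex numbers are R[i] for R : rcfType (real closed
   field), via mathcomp-real-closed; R[i] is a numClosedFieldType. *)
From HB Require Import structures.
From mathcomp Require Import all_boot all_order all_algebra.
From mathcomp Require Import complex.
Set Implicit Arguments. Unset Strict Implicit. Unset Printing Implicit Defensive.
Import Order.TTheory GRing.Theory Num.Theory.
Local Open Scope ring_scope.

Section Defs.
Variable C : numClosedFieldType.

Definition adjmx {m n} (A : 'M[C]_(m, n)) : 'M[C]_(n, m) := (map_mx Num.conj A)^T.

Definition hermitian {n} (A : 'M[C]_n) : Prop := adjmx A = A.

Definition psd {n} (A : 'M[C]_n) : Prop :=
  hermitian A /\ forall v : 'cV[C]_n, 0 <= (adjmx v *m A *m v) 0 0.

Definition density_matrix {n} (A : 'M[C]_n) : Prop := psd A /\ \tr A = 1.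

(* the eigenvalues of A, with algebraic multiplicity (roots of the
   characteristic polynomial, which splits since C is algebraically closed) *)
Definition eigenvalues {n} (A : 'M[C]_n) : seq C :=
  sval (closed_field_poly_normal (char_poly A)).

(* tr|A| = sum of absolute values of the eigenvalues (for Hermitian A) *)
Definition trabs {n} (A : 'M[C]_n) : C := \sum_(z <- eigenvalues A) `|z|.

Definition Dtr {n} (r1 r2 : 'M[C]_n) : C := 2^-1 * trabs (r1 - r2).

Definition superfid {n} (r1 r2 : 'M[C]_n) : C :=
  \tr (r1 *m r2) + sqrtC (1 - \tr (r1 *m r1)) * sqrtC (1 - \tr (r2 *m r2)).
End Defs.

(* Main.v *)
Require Import Defs.
From HB Require Import structures.
From mathcomp Require Import all_boot all_order all_algebra.
From mathcomp Require Import complex spectral.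
From mathcomp Require sesquilinear.
From mathcomp Require Import ring.
Import Order.TTheory GRing.Theory Num.Theory.
Set Implicit Arguments. Unset Strict Implicit. Unset Printing Implicit Defensive.
Local Open Scope ring_scope.

Section S.
Variable C : numClosedFieldType.
Local Open Scope sesquilinear_scope.

Lemma adjmxE m n (A : 'M[C]_(m,n)) : adjmx A = A ^t*.
Proof. by rewrite /adjmx map_trmx. Qed.

Lemma herm_norm m (H : 'M[C]_m) : Defs.hermitian H -> H \is normalmx.
Proof. rewrite /Defs.hermitian adjmxE => hH; apply: hermitian_normalmx; apply/sesquilinear.is_hermitianmxP. by rewrite expr0 scale1r hH. Qed.

Variable n : nat.
Implicit Types H X : 'M[C]_n.

Lemma specE H : Defs.hermitian H ->
  H = (spectralmx H)^t* *m diag_mx (spectral_diag H) *m spectralmx H.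
Proof.
move=> hH; have /orthomx_spectralP E := herm_norm hH.
by rewrite {1}E invmx_unitary // spectral_unitarymx.
Qed.

Lemma spec_tK H : (spectralmx H)^t* *m spectralmx H = 1%:M.
Proof.
rewrite -invmx_unitary ?spectral_unitarymx //; exact: mulVmx (spectral_unit H).
Qed.

Lemma trHX H X : Defs.hermitian H -> \tr (H *m X) =
  \sum_i spectral_diag H 0 i * (spectralmx H *m X *m (spectralmx H)^t*) i i.
Proof.
move=> hH; rewrite {1}(specE hH) -!mulmxA mxtrace_mulC -!mulmxA mul_diag_mx.
rewrite /mxtrace; apply: eq_bigr => i _; by rewrite !mxE.
Qed.

Lemma psd_diag X (P : 'M[C]_n) i : psd X -> 0 <= (P *m X *m P^t*) i i.
Proof.
case=> _ /(_ ((row i P)^t*)); rewrite adjmxE trmxCK.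
suff -> : (row i P *m X *m (row i P)^t*) 0 0 = (P *m X *m P^t*) i i by [].
rewrite !mxE; apply: eq_bigr => j _; rewrite !mxE; congr (_ * _).
by apply: eq_bigr => k _; rewrite !mxE.
Qed.

Lemma sum_diag H X :
  \sum_i (spectralmx H *m X *m (spectralmx H)^t*) i i = \tr X.
Proof.
by rewrite -/(mxtrace _) mxtrace_mulC mulmxA spec_tK mul1mx.
Qed.

Lemma char_poly_conj (P D : 'M[C]_n) : P^t* *m P = 1%:M ->
  char_poly (P^t* *m D *m P) = char_poly D.
Proof.
move=> QP.
have E : char_poly_mx (P^t* *m D *m P) =
   map_mx polyC (P^t*) *m char_poly_mx D *m map_mx polyC P.
  rewrite /char_poly_mx mulmxBr mulmxBl -!map_mxM scalar_mxC -mulmxA.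
  by rewrite -mulmxA -map_mxM QP map_mx1 mulmx1 mulmxA.
have h : Num.conj (\det P^T) * \det P = 1.
  by rewrite -(det_map_mx Num.conj) -det_mulmx QP det1.
rewrite /char_poly E !det_mulmx !det_map_mx.
rewrite mulrC mulrA -rmorphM [_ * Num.conj _]mulrC.
have -> : (\det P^T)^* * \det P = 1 := h.
by rewrite rmorph1 mul1r.
Qed.

Lemma trabsE H : Defs.hermitian H ->
  trabs H = \sum_i `|spectral_diag H 0 i|.
Proof.
move=> hH; rewrite /trabs /eigenvalues; case: closed_field_poly_normal => s /= Hs.
have Hc : char_poly H = \prod_(i < n) ('X - (spectral_diag H 0 i)%:P).
  rewrite {1}(specE hH) char_poly_conj ?spec_tK // char_poly_trig ?diag_mx_is_trig //.
  by apply: eq_bigr => i _; rewrite mxE eqxx mulr1n.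
have /monicP lc := char_poly_monic H.
rewrite lc scale1r in Hs.
have hp : perm_eq s [seq spectral_diag H 0 i | i <- index_enum 'I_n].
  by apply: prod_XsubC_eq; rewrite -Hs Hc big_map.
by rewrite (perm_big _ hp) big_map.
Qed.

Lemma trE H : Defs.hermitian H -> \tr H = \sum_i spectral_diag H 0 i.
Proof.
move=> hH; rewrite {1}(specE hH) mxtrace_mulC mulmxA (unitarymxP (spectral_unitarymx H)) mul1mx.
by rewrite /mxtrace; apply: eq_bigr => i _; rewrite mxE eqxx mulr1n.
Qed.

Lemma dreal H : Defs.hermitian H -> forall i, spectral_diag H 0 i \is Num.real.
Proof.
move=> hH i; have : spectral_diag H \is a realmx.
  apply: hermitian_spectral_diag_real; apply/sesquilinear.is_hermitianmxP.
  by move: hH; rewrite /Defs.hermitian adjmxE expr0 scale1r => ->.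
by move/mxOverP; apply.
Qed.

Lemma key H X : Defs.hermitian H -> psd X -> \tr X = 1 ->
  2 * \tr (H *m X) <= trabs H + \tr H /\ - (2 * \tr (H *m X)) <= trabs H - \tr H.
Proof.
move=> hH pX X1.
set d := spectral_diag H.
set y := fun i => (spectralmx H *m X *m (spectralmx H)^t*) i i.
have y0 i : 0 <= y i by apply: psd_diag.
have y1 i : y i <= 1.
  rewrite -X1 -(sum_diag H X) (bigD1 i) //= lerDl; apply: sumr_ge0 => j _; exact: y0.
rewrite trabsE // trE // trHX //.
split; rewrite -subr_ge0.
  have -> : \sum_i `|d 0 i| + \sum_i d 0 i - 2 * \sum_i d 0 i * y i =
    \sum_i (`|d 0 i| + d 0 i - 2 * (d 0 i * y i)).
    by rewrite sumrB big_split mulr_sumr.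
  apply: sumr_ge0 => i _; have [d0|d0] := real_ge0P (dreal hH i).
    have -> : d 0 i + d 0 i - 2 * (d 0 i * y i) = 2 * (d 0 i * (1 - y i)) by move: (d 0 i) (y i) => a b; ring.
    by rewrite mulr_ge0 ?ler0n // mulr_ge0 // subr_ge0.
  have -> : - d 0 i + d 0 i - 2 * (d 0 i * y i) = 2 * ((- d 0 i) * y i) by move: (d 0 i) (y i) => a b; ring.
  by rewrite mulr_ge0 ?ler0n // mulr_ge0 // oppr_ge0 ltW.
have -> : \sum_i `|d 0 i| - \sum_i d 0 i - - (2 * \sum_i d 0 i * y i) =
  \sum_i (`|d 0 i| - d 0 i + 2 * (d 0 i * y i)).
  by rewrite opprK big_split sumrB mulr_sumr.
apply: sumr_ge0 => i _; have [d0|d0] := real_ge0P (dreal hH i).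
  have -> : d 0 i - d 0 i + 2 * (d 0 i * y i) = 2 * (d 0 i * y i) by move: (d 0 i) (y i) => a b; ring.
  by rewrite mulr_ge0 ?ler0n // mulr_ge0.
have -> : - d 0 i - d 0 i + 2 * (d 0 i * y i) = 2 * ((- d 0 i) * (1 - y i)) by move: (d 0 i) (y i) => a b; ring.
by rewrite mulr_ge0 ?ler0n // mulr_ge0 // ?subr_ge0 // oppr_ge0 ltW.
Qed.

Lemma psd_trabs X : psd X -> trabs X = \tr X.
Proof.
move=> pX; have hX := pX.1; rewrite trabsE // trE //.
apply: eq_bigr => i _; apply: ger0_norm.
have := psd_diag (spectralmx X) i pX.
have := specE hX; set P := spectralmx X; set D := diag_mx _ => E.
rewrite [in X in _ <= X]E !mulmxA (unitarymxP (spectral_unitarymx X)) mul1mx.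
rewrite -mulmxA (unitarymxP (spectral_unitarymx X)) mulmx1.
by rewrite /D mxE eqxx mulr1n.
Qed.

Lemma alg (T c b s1 s2 : C) : s2 ^+ 2 = 1 - b ->
  T - 2 * (1 - (c + s1 * s2)) = (T + 2 * (c - b)) + 2 * (s2 * (s1 - s2)).
Proof. move=> h; have -> : b = 1 - s2 ^+ 2 by rewrite h; ring. ring. Qed.

Lemma main (r1 r2 : 'M[C]_n) :
  density_matrix r1 -> density_matrix r2 -> 1 - superfid r1 r2 <= Dtr r1 r2.
Proof.
move=> [p1 t1] [p2 t2].
have hD : Defs.hermitian (r1 - r2).
  rewrite /Defs.hermitian /adjmx map_mxB linearB /=.
  by rewrite -/(adjmx r1) -/(adjmx r2) p1.1 p2.1.
have tD : \tr (r1 - r2) = 0 by rewrite linearB /= t1 t2 subrr.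
have [k1 _] := key hD p1 t1.
have [_ k2] := key hD p2 t2.
rewrite tD addr0 subr0 in k1 k2.
rewrite mulmxBl linearB /= in k1; rewrite mulmxBl linearB /= in k2.
rewrite [\tr (r2 *m r1)]mxtrace_mulC in k1.
have a1 : \tr (r1 *m r1) <= 1.
  have [k _] := key p1.1 p1 t1; rewrite psd_trabs // t1 in k.
  by rewrite -(ler_pM2l (_ : (0:C) < 2)) ?ltr0n // mulr1.
have b1 : \tr (r2 *m r2) <= 1.
  have [k _] := key p2.1 p2 t2; rewrite psd_trabs // t2 in k.
  by rewrite -(ler_pM2l (_ : (0:C) < 2)) ?ltr0n // mulr1.
rewrite /superfid /Dtr.
set T := trabs _ in k1 k2 *.
set a := \tr (r1 *m r1) in k1 a1 *.
set b := \tr (r2 *m r2) in k2 b1 *.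
set c := \tr (r1 *m r2) in k1 k2 *.
set s1 := sqrtC (1 - a); set s2 := sqrtC (1 - b).
have s10 : 0 <= s1 by rewrite sqrtC_ge0 subr_ge0.
have s20 : 0 <= s2 by rewrite sqrtC_ge0 subr_ge0.
rewrite ler_pdivlMl ?ltr0n // -subr_ge0.
have [h|h] := real_leP (ger0_real s10) (ger0_real s20).
  rewrite [s1 * s2]mulrC (@alg T c a s2 s1) ?sqrtCK //.
  rewrite addr_ge0 // ?mulr_ge0 ?ler0n ?subr_ge0 //.
  by rewrite -opprB mulrN subr_ge0.
rewrite (@alg T c b s1 s2) ?sqrtCK //.
rewrite addr_ge0 // ?mulr_ge0 ?ler0n ?subr_ge0 ?(ltW h) //.
by rewrite -subr_ge0 opprK in k2.
Qed.
End S.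

Theorem theorem1 (R : rcfType) (N : nat) (r1 r2 : 'M[R[i]]_N) :
  (1 <= N)%N -> density_matrix r1 -> density_matrix r2 ->
  1 - superfid r1 r2 <= Dtr r1 r2.
Proof. by move=> _; apply: main. Qed.
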